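(* Let $\mathcal{H}$ be a real Hilbert space, $\alpha,\beta>0$, and $f(\theta)=\beta\exp\big(\frac{\|\theta\|^2}{2\alpha}\big)$ for $\theta\in\mathcal{H}$. Then for all $w\in\mathcal{H}$, \[ f^*(w)\ \le\ \|w\|\sqrt{2\alpha\log\Big(\frac{\sqrt{\alpha}\,\|w\|}{\beta}+1\Big)}-\beta. \]
   Context: $f^*(w)=\sup_{\theta\in\mathcal{H}}(\langle\theta,w\rangle-f(\theta))$ is the Fenchel conjugate. *)

(* Defs.v *)
From HB Require Import structures.
From mathcomp Require Import all_boot all_order all_algebra.
From mathcomp Require Import all_classical all_reals all_analysis.
Set Implicit Arguments. Unset Strict Implicit. Unset Printing Implicit Defensive.
Import Order.TTheory GRing.Theory Num.Theory.
Import numFieldNormedType.Exports.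
Local Open Scope classical_set_scope.
Local Open Scope ring_scope.

(* A real Hilbert space is a complete normed space V over R together with
   a real inner product ip whose induced norm is the norm of V. *)
Record is_inner_product (R : realType) (V : completeNormedModType R)
    (ip : V -> V -> R) : Prop := {
  ip_sym : forall x y, ip x y = ip y x;
  ip_linl : forall (a : R) x y z, ip (a *: x + y) z = a * ip x z + ip y z;
  ip_norm : forall x, ip x x = `|x| ^+ 2
}.

Definition fenchel_conj (R : realType) (V : completeNormedModType R)
    (ip : V -> V -> R) (f : V -> R) (w : V) : \bar R :=
  ereal_sup [set ((ip theta w - f theta)%:E) | theta in [set: V]].

(* Main.v *)
Require Import Defs.
From HB Require Import structures.
From mathcomp Require Import all_boot all_order all_algebra all_classical all_reals all_analysis.
From mathcomp Require Import ring lra.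
Import Order.TTheory GRing.Theory Num.Theory.
Import numFieldNormedType.Exports.
Local Open Scope classical_set_scope.
Local Open Scope ring_scope.

Lemma scal (R : realType) (alpha beta r c : R) : 0 < alpha -> 0 < beta -> 0 <= r -> 0 <= c ->
 r*c - beta*expR(r^+2/(2*alpha)) <= c * Num.sqrt(2*alpha*ln(Num.sqrt alpha * c/beta + 1)) - beta.
Proof.
move=> Ha Hb Hr Hc.
set q := Num.sqrt alpha.
have hq2 : q ^+ 2 = alpha by rewrite sqr_sqrtr // ltW.
have hq : 0 < q by rewrite sqrtr_gt0.
set A := q * c / beta + 1.
have hA0 : 0 <= q * c / beta by apply: divr_ge0; [apply: mulr_ge0 => //; apply: ltW|apply: ltW].
have hA1 : 1 <= A by rewrite /A; lra.
have hL : 0 <= ln A by rewrite ln_ge0.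
set s := Num.sqrt _.
have hs0 : 0 <= s := sqrtr_ge0 _.
have hs2 : s ^+ 2 = 2 * alpha * ln A by rewrite sqr_sqrtr //; apply: mulr_ge0 hL; lra.
have hbA : beta * A = q * c + beta by rewrite /A; field; rewrite gt_eqF.
have hE : expR (s ^+ 2 / (2 * alpha)) = A.
  rewrite hs2 mulrC mulrA mulVf ?mul1r ?lnK //; last by rewrite gt_eqF // mulr_gt0.
  by rewrite posrE; lra.
have h2a : 0 < 2 * alpha by rewrite mulr_gt0.
have [hrs|hsr] := lerP r s.
  have : 1 <= expR (r ^+ 2 / (2 * alpha)).
    have := expR_ge1Dx (r ^+ 2 / (2 * alpha)).
    have : 0 <= r ^+ 2 / (2 * alpha) by rewrite divr_ge0 // ?sqr_ge0 // ltW.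
    lra.
  move=> h1; nra.
set d := (r ^+ 2 - s ^+ 2) / (2 * alpha).
have hd : d * (2 * alpha) = r ^+ 2 - s ^+ 2 by rewrite /d divfK // gt_eqF.
have hd0 : 0 <= d.
  apply: divr_ge0; last exact: ltW.
  rewrite subr_ge0; nra.
have hsplit : r ^+ 2 / (2 * alpha) = s ^+ 2 / (2 * alpha) + d.
  by rewrite /d mulrBl addrC subrK.
have hexp : A * (1 + d) <= expR (r ^+ 2 / (2 * alpha)).
  rewrite hsplit expRD hE ler_pM2l; last lra.
  exact: expR_ge1Dx.
have K : r - s <= q * (1 + d).
  rewrite -(@ler_pM2l _ (2 * q)) ?mulr_gt0 //.
  have -> : 2 * q * (q * (1 + d)) = 2 * q ^+ 2 + d * (2 * alpha) by rewrite -[in RHS]hq2; ring.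
  rewrite hd.
  have h1 := sqr_ge0 (r - s - q).
  have h2 : 0 <= s * (r - s) by apply: mulr_ge0 => //; lra.
  nra.
have K2 : c * (r - s) <= c * (q * (1 + d)) by rewrite ler_wpM2l.
have K3 : beta * (A * (1 + d)) <= beta * expR (r ^+ 2 / (2 * alpha)) by rewrite ler_pM2l.
rewrite mulrA hbA in K3.
Time nra.
Qed.

Section CS.
Variables (R : realType) (V : completeNormedModType R) (ip : V -> V -> R).
Hypothesis Hip : is_inner_product ip.

Lemma ip0l z : ip 0 z = 0.
Proof.
have := ip_linl Hip 1 0 0 z; rewrite scaler0 addr0 mul1r => h.
have : ip 0 z + ip 0 z - ip 0 z = ip 0 z - ip 0 z by rewrite -h.
by rewrite addrK subrr.
Qed.

Lemma ipZl a x z : ip (a *: x) z = a * ip x z.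
Proof. by have := ip_linl Hip a x 0 z; rewrite addr0 ip0l addr0. Qed.

Lemma ipDl x y z : ip (x + y) z = ip x z + ip y z.
Proof. by have := ip_linl Hip 1 x y z; rewrite scale1r mul1r. Qed.

Lemma ipZr a x z : ip z (a *: x) = a * ip z x.
Proof. by rewrite ip_sym // ipZl // (ip_sym Hip). Qed.

Lemma ipDr x y z : ip z (x + y) = ip z x + ip z y.
Proof. by rewrite ip_sym // ipDl // !(ip_sym Hip z). Qed.

Lemma cauchy_schwarz x y : ip x y <= `|x| * `|y|.
Proof.
have hx := normr_ge0 x; have hy := normr_ge0 y.
have [hxy|hxy] := eqVneq (`|x| * `|y|) 0.
  move/eqP: hxy; rewrite mulf_eq0 => /orP[]; rewrite normr_eq0 => /eqP ->.
    by rewrite ip0l normr0 mul0r.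
  by rewrite ip_sym // ip0l normr0 mulr0.
set u := `|y| *: x + (- `|x|) *: y.
have h := ip_norm Hip u.
have hu : 0 <= ip u u by rewrite h sqr_ge0.
rewrite /u !ipDl !ipDr !ipZl !ipZr !(ip_norm Hip) (ip_sym Hip y x) in hu.
have hp : 0 < `|x| * `|y| by rewrite lt0r hxy mulr_ge0.
Time nra.
Qed.
End CS.

Theorem lemma14 (R : realType) (V : completeNormedModType R)
    (ip : V -> V -> R) (Hip : is_inner_product ip)
    (alpha beta : R) (Ha : 0 < alpha) (Hb : 0 < beta) (w : V) :
  (fenchel_conj ip (fun theta : V => (beta * expR (`|theta| ^+ 2 / (2 * alpha)))%R) w
   <= (`|w| * Num.sqrt (2 * alpha * ln (Num.sqrt alpha * `|w| / beta + 1)) - beta)%:E)%E.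
Proof.
rewrite /fenchel_conj; apply: ge_ereal_sup => _ [t _ <-]; rewrite lee_fin.
have := @cauchy_schwarz R V ip Hip t w.
have := @scal R _ _ _ _ Ha Hb (normr_ge0 t) (normr_ge0 w).
Time lra.
Qed.
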